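(* Let $\sigma_\theta$, $A_\theta$, $\Sigma$ be as in the context, with $\Sigma\ne\emptyset$, and assume that for every $\delta>0$ there is $\nu_\delta>0$ such that $A_\theta(x)\ge\nu_\delta I$ for all $\theta\in\Theta$ and all $x\in\mathbb T^N$ with $\operatorname{dist}(x,\Sigma)>\delta$. Then for every $\kappa>0$ the condition (SS$_\kappa$) holds.
   Context: $\mathbb T^N=\mathbb R^N/\mathbb Z^N$, $\Theta$ a metric space, $C>0$ fixed; for each $\theta\in\Theta$, $\sigma_\theta\in W^{1,\infty}(\mathbb T^N;\mathcal M_N)$ with $|\sigma_\theta|,|D\sigma_\theta|\le C$ and $A_\theta=\sigma_\theta\sigma_\theta^T$. $\Sigma:=\{x\in\mathbb T^N:A_\theta(x)=0\ \forall\theta\}$. $\pi:\mathbb R^N\to\mathbb T^N$ is the projection; $\tilde\Sigma=\pi^{-1}(\Sigma)$, $\tilde\sigma_\theta=\sigma_\theta\circ\pi$, $\tilde A_\theta=\tilde\sigma_\theta\tilde\sigma_\theta^T$, $\tilde\Sigma_\delta=\{\tilde x:\operatorname{dist}(\tilde x,\tilde\Sigma)\le\delta\}$. Condition (SS$_\kappa$): for every $\delta>0$ there exist $\tilde\psi_\delta\in C^2(\mathbb R^N)$ and a bounded open set $\Omega_\delta\subset\mathbb R^N$ with $[0,1]^N\subset\Omega_\delta$, $\tilde\psi_\delta\le0$ in $\Omega_\delta$, $\tilde\psi_\delta\ge0$ in $\mathbb R^N\setminus\Omega_\delta$, and $\inf_{\theta\in\Theta}\{-\mathrm{tr}(\tilde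 A_\theta(\tilde x)D^2\tilde\psi_\delta(\tilde x))\}-\kappa|D\tilde\psi_\delta(\tilde x)|>0$ for all $\tilde x\in\tilde\Sigma_\delta^C\cap\Omega_\delta$. *)

(* Defs.v *)
From mathcomp Require Import ssreflect ssrfun ssrbool eqtype ssrnat seq fintype bigop.
From Stdlib Require Import Reals ZArith.

Set Implicit Arguments.
Unset Strict Implicit.

Local Open Scope R_scope.

Definition vec (N : nat) := 'I_N -> R.
Definition mat (N : nat) := 'I_N -> 'I_N -> R.

Definition sumI (N : nat) (f : 'I_N -> R) : R := \big[Rplus/0]_(i < N) f i.

Definition vadd N (x y : vec N) : vec N := fun i => x i + y i.
Definition vsub N (x y : vec N) : vec N := fun i => x i - y i.
Definition vshift N (x : vec N) (i : 'I_N) (t : R) : vec N :=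
  fun k => if k == i then x k + t else x k.
Definition vaddZ N (x : vec N) (z : 'I_N -> Z) : vec N := fun i => x i + IZR (z i).

Definition vnorm N (x : vec N) : R := sqrt (sumI (fun i => x i ^ 2)).
Definition mnorm N (M : mat N) : R := sqrt (sumI (fun i => sumI (fun j => M i j ^ 2))).
Definition msub N (M P : mat N) : mat N := fun i j => M i j - P i j.

Definition AAt N (s : mat N) : mat N := fun i j => sumI (fun k => s i k * s j k).
Definition trmul N (M P : mat N) : R := sumI (fun i => sumI (fun j => M i j * P j i)).

(* dist(x, S) <= d  (inf over S of |x - s|; +infinity when S is empty) *)
Definition dist_le N (S : vec N -> Prop) (x : vec N) (d : R) : Prop :=
  forall eps, 0 < eps -> exists s, S s /\ vnorm (vsub x s) < d + eps.

Definition cont_RN N (g : vec N -> R) : Prop :=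
  forall x eps, 0 < eps -> exists r, 0 < r /\
    forall y, vnorm (vsub y x) < r -> Rabs (g y - g x) < eps.

Definition has_partial N (f : vec N -> R) (i : 'I_N) (x : vec N) (l : R) : Prop :=
  derivable_pt_lim (fun t => f (vshift x i t)) 0 l.

(* f is C^2 on R^N with gradient Df and Hessian D2f:
   all first and second partial derivatives exist everywhere, and the second
   ones are continuous (this is the usual characterisation of C^2). *)
Definition C2_with N (f : vec N -> R) (Df : vec N -> vec N) (D2f : vec N -> mat N) : Prop :=
  (forall x i, has_partial f i x (Df x i)) /\
  (forall x i j, has_partial (fun y => Df y i) j x (D2f x i j)) /\
  (forall i j, cont_RN (fun y => D2f y i j)).

Definition open_RN N (O : vec N -> Prop) : Prop :=
  forall x, O x -> exists r, 0 < r /\ forall y, vnorm (vsub y x) < r -> O y.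

Definition bounded_RN N (O : vec N -> Prop) : Prop :=
  exists M, forall x, O x -> vnorm x <= M.

Definition unit_cube N (x : vec N) : Prop := forall i, 0 <= x i <= 1.

(* Standing assumptions on the family sigma_theta, lifted to R^N:
   Z^N-periodic (i.e. a function on T^N), |sigma| <= C and Lipschitz with
   constant C (W^{1,infty}(T^N) with |D sigma| <= C). *)
Definition sigma_family N (Theta : Type) (C : R) (sigma : Theta -> vec N -> mat N) : Prop :=
  (forall th x z, sigma th (vaddZ x z) = sigma th x) /\
  (forall th x, mnorm (sigma th x) <= C) /\
  (forall th x y, mnorm (msub (sigma th x) (sigma th y)) <= C * vnorm (vsub x y)).

(* tilde Sigma = pi^{-1}(Sigma) : common zero set of all A_theta *)
Definition SigmaT N (Theta : Type) (sigma : Theta -> vec N -> mat N) (x : vec N) : Prop :=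
  forall th i j, AAt (sigma th x) i j = 0.

Definition SS N (Theta : Type) (sigma : Theta -> vec N -> mat N) (kappa : R) : Prop :=
  forall delta, 0 < delta ->
  exists (psi : vec N -> R) (Dpsi : vec N -> vec N) (D2psi : vec N -> mat N)
         (Omega : vec N -> Prop),
    C2_with psi Dpsi D2psi /\
    open_RN Omega /\ bounded_RN Omega /\
    (forall x, unit_cube x -> Omega x) /\
    (forall x, Omega x -> psi x <= 0) /\
    (forall x, ~ Omega x -> 0 <= psi x) /\
    (forall x, ~ dist_le (SigmaT sigma) x delta -> Omega x ->
       (* inf_theta { - tr(A_theta D^2 psi) } - kappa |D psi| > 0 *)
       exists m, m - kappa * vnorm (Dpsi x) > 0 /\
         forall th, m <= - trmul (AAt (sigma th x)) (D2psi x)).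

(* Main.v *)
From HB Require Import structures.
Require Import Defs.
From mathcomp Require Import ssreflect ssrfun ssrbool eqtype ssrnat seq fintype bigop.
From Stdlib Require Import Reals ZArith Lra Psatz FunctionalExtensionality.
From Coquelicot Require Import Coquelicot.
Local Open Scope R_scope.
Set Implicit Arguments.

HB.instance Definition _ := Monoid.isComLaw.Build R 0 Rplus (fun a b c => esym (Rplus_assoc a b c)) Rplus_comm Rplus_0_l.

Lemma sumI_add N (f g : 'I_N -> R) : sumI (fun i => f i + g i) = sumI f + sumI g.
Proof. rewrite /sumI; exact: (big_split (Rplus : Monoid.com_law 0)). Qed.

Lemma sumI_scal N c (f : 'I_N -> R) : sumI (fun i => c * f i) = c * sumI f.
Proof. rewrite /sumI; apply: (big_rec2 (fun a b => a = c * b)) => [|i a b _ ->]; ring. Qed.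

Lemma sumI_le N (f g : 'I_N -> R) : (forall i, f i <= g i) -> sumI f <= sumI g.
Proof. move=> H; rewrite /sumI; apply: (big_rec2 (fun a b => a <= b)) => [|i a b _ Hab]; [lra| have := H i; lra]. Qed.

Lemma sumI_ext N (f g : 'I_N -> R) : (forall i, f i = g i) -> sumI f = sumI g.
Proof. move=> H; rewrite /sumI; apply: eq_bigr => i _; exact: H. Qed.

Lemma sumI_sub N (f g : 'I_N -> R) : sumI (fun i => f i - g i) = sumI f - sumI g.
Proof.
have -> : sumI (fun i => f i - g i) = sumI (fun i => f i + (-1) * g i) by apply: sumI_ext => i; ring.
rewrite sumI_add sumI_scal; ring. Qed.

Lemma sumI_ge0 N (f : 'I_N -> R) : (forall i, 0 <= f i) -> 0 <= sumI f.
Proof. move=> H; rewrite /sumI; apply: (big_ind (fun x => 0 <= x)) => //; [lra| move=> *; lra]. Qed.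

Lemma sumI_if N (f : 'I_N -> R) i : sumI (fun k => if k == i then f k else 0) = f i.
Proof.
rewrite /sumI (bigD1 i) //= eqxx big1 /=; first ring.
by move=> k /negbTE ->.
Qed.

Lemma sumI_single N (f : 'I_N -> R) i : (forall k, 0 <= f k) -> f i <= sumI f.
Proof.
move=> H; rewrite /sumI (bigD1 i) //=.
have : 0 <= \big[Rplus/0]_(k | k != i) f k.
  apply: (big_ind (fun x => 0 <= x)) => //; [lra| move=> *; lra].
move=> Hs; change (f i <= f i + \big[Rplus/0]_(k | k != i) f k); lra.
Qed.

Lemma coord_le N (v : vec N) i : Rabs (v i) <= vnorm v.
Proof.
rewrite /vnorm -sqrt_Rsqr_abs Rsqr_pow2; apply: sqrt_le_1_alt.
apply: (@sumI_single _ (fun k => v k ^ 2)) => k; apply: pow2_ge_0.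
Qed.

Lemma cont_const N c : cont_RN (fun _ : vec N => c).
Proof. move=> x eps He; exists 1; split; [lra|] => y _; rewrite Rminus_diag Rabs_R0; apply: Rle_lt_trans (Rle_refl _) He. Qed.

Lemma cont_coord N (i : 'I_N) : cont_RN (fun y : vec N => y i).
Proof. move=> x eps He; exists eps; split => // y Hy; have := coord_le (vsub y x) i; change (vsub y x i) with (y i - x i); lra. Qed.

Lemma cont_add N (f g : vec N -> R) : cont_RN f -> cont_RN g -> cont_RN (fun y => f y + g y).
Proof.
move=> Hf Hg x eps He.
have [r1 [H1 Hr1]] := Hf x (eps/2) ltac:(lra).
have [r2 [H2 Hr2]] := Hg x (eps/2) ltac:(lra).
exists (Rmin r1 r2); split; first exact: Rmin_pos.
move=> y Hy.
have h1 := Hr1 y ltac:(have := Rmin_l r1 r2; lra).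
have h2 := Hr2 y ltac:(have := Rmin_r r1 r2; lra).
have := Rabs_triang (f y - f x) (g y - g x).
have -> : f y - f x + (g y - g x) = f y + g y - (f x + g x) by ring.
lra.
Qed.

Lemma cont_ext N (f g : vec N -> R) : (forall y, f y = g y) -> cont_RN f -> cont_RN g.
Proof. move=> E Hf x eps He; have [r [Hr H]] := Hf x eps He; exists r; split => // y Hy; rewrite -!E; exact: H. Qed.

Lemma cont_comp N (h : R -> R) (g : vec N -> R) :
  (forall t, ex_derive h t) -> cont_RN g -> cont_RN (fun y => h (g y)).
Proof.
move=> Hh Hg x eps He.
have Hc : continuity_pt h (g x).
  apply/continuity_pt_filterlim; exact: ex_derive_continuous.
have [alp [Ha Hal]] := Hc eps He.
have [r [Hr H]] := Hg x alp Ha.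
exists r; split => // y Hy.
case: (Req_dec (g y) (g x)) => [->|Hne]; first by rewrite Rminus_diag Rabs_R0.
have := Hal (g y) (conj (conj I (not_eq_sym Hne)) (H y Hy)).
by rewrite /= /R_dist.
Qed.

Lemma cont_mul N (f g : vec N -> R) : cont_RN f -> cont_RN g -> cont_RN (fun y => f y * g y).
Proof.
move=> Hf Hg.
have Hng : cont_RN (fun y => - g y).
  apply: (cont_comp (h := fun t => - t)) => // t; auto_derive; done.
have Hs : forall (k : vec N -> R), cont_RN k -> cont_RN (fun y => (k y) ^ 2 / 4).
  move=> k Hk; apply: (cont_comp (h := fun t => t ^ 2 / 4)) => // t; auto_derive; done.
have H1 := Hs _ (cont_add Hf Hg).
have H2 := Hs _ (cont_add Hf Hng).
have H2' : cont_RN (fun y => - ((f y + - g y) ^ 2 / 4)).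
  apply: (cont_comp (h := fun t => - t)) H2 => t; auto_derive; done.
apply: cont_ext (cont_add H1 H2') => y; field.
Qed.

Lemma cont_sum N (I : Type) (r : seq I) (F : I -> vec N -> R) :
  (forall k, cont_RN (F k)) -> cont_RN (fun y => \big[Rplus/0]_(k <- r) F k y).
Proof.
move=> HF; elim: r => [|a r IH].
  apply: cont_ext (cont_const 0) => y; by rewrite big_nil.
apply: cont_ext (cont_add (HF a) IH) => y; by rewrite big_cons.
Qed.

Lemma cont_sumI N M (F : 'I_M -> vec N -> R) :
  (forall k, cont_RN (F k)) -> cont_RN (fun y => sumI (fun k => F k y)).
Proof. exact: cont_sum. Qed.

Definition uf N (s x : vec N) := sumI (fun k => (x k - s k) ^ 2).

Lemma uf_ge0 N (s x : vec N) : 0 <= uf s x.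
Proof. apply: sumI_ge0 => k; apply: pow2_ge_0. Qed.

Lemma u_shift N (s x : vec N) i t :
  uf s (vshift x i t) = uf s x + (2 * t * (x i - s i) + t ^ 2).
Proof.
rewrite /uf -(sumI_if (fun k => 2 * t * (x k - s k) + t ^ 2) i) -sumI_add.
apply: sumI_ext => k; rewrite /vshift; case: eqP => [->|_]; ring.
Qed.

Lemma cont_u N (s : vec N) : cont_RN (uf s).
Proof.
apply: (@cont_sumI N N (fun k y => (y k - s k) ^ 2)) => k.
apply: (cont_comp (h := fun t => (t - s k) ^ 2)) (cont_coord k) => t; auto_derive; done.
Qed.

Lemma exp_le a b : a <= b -> exp a <= exp b.
Proof. case=> [h|->]; [apply: Rlt_le; exact: exp_increasing| lra]. Qed.

Section Psi.
Variables (N : nat) (s : vec N) (lam R2 : R).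
Definition psi (x : vec N) := exp (- lam * R2) - exp (- lam * uf s x).
Definition Dpsi (x : vec N) : vec N := fun i => 2 * lam * exp (- lam * uf s x) * (x i - s i).
Definition D2psi (x : vec N) : mat N := fun i j =>
  2 * lam * exp (- lam * uf s x) * ((if i == j then 1 else 0) - 2 * lam * (x i - s i) * (x j - s j)).

Lemma psi_C2 : C2_with psi Dpsi D2psi.
Proof.
split; [|split].
- move=> x i; rewrite /has_partial.
  have -> : (fun t => psi (vshift x i t)) =
     (fun t => exp (- lam * R2) - exp (- lam * (uf s x + (2 * t * (x i - s i) + t ^ 2)))).
    apply: functional_extensionality => t; by rewrite /psi u_shift.
  apply/is_derive_Reals; auto_derive; first done.
  rewrite /Dpsi (_ : uf s x + (2 * 0 * (x i - s i) + 0 * (0 * 1)) = uf s x); ring.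
- move=> x i j; rewrite /has_partial.
  have -> : (fun t => Dpsi (vshift x j t) i) =
     (fun t => 2 * lam * exp (- lam * (uf s x + (2 * t * (x j - s j) + t ^ 2))) *
               (x i - s i + (if i == j then t else 0))).
    apply: functional_extensionality => t; rewrite /Dpsi u_shift /vshift.
    case: (i == j); ring.
  rewrite /D2psi.
  case: eqP => [->|_]; apply/is_derive_Reals; auto_derive; try done; try rewrite (_ : uf s x + (2 * 0 * (x j - s j) + 0 * (0 * 1)) = uf s x); ring.
- move=> i j.
  have He : cont_RN (fun y => 2 * lam * exp (- lam * uf s y)).
    apply: (cont_comp (h := fun t => 2 * lam * exp (- lam * t))) (cont_u s) => t; auto_derive; done.
  have Hb : cont_RN (fun y : vec N => (if i == j then 1 else 0) - 2 * lam * (y i - s i) * (y j - s j)).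
    have Hi : cont_RN (fun y : vec N => - (2 * lam) * (y i - s i)).
      apply: (cont_comp (h := fun t => - (2 * lam) * (t - s i))) (cont_coord i) => t; auto_derive; done.
    have Hj : cont_RN (fun y : vec N => (y j - s j)).
      apply: (cont_comp (h := fun t => (t - s j))) (cont_coord j) => t; auto_derive; done.
    apply: cont_ext (cont_add (cont_const (N:=N) (if i == j then 1 else 0)) (cont_mul Hi Hj)) => y /=; ring.
  exact: cont_mul He Hb.
Qed.
End Psi.

Theorem proposition2p5 (N : nat) (Theta : Type) (C : R) (HC : 0 < C)
  (sigma : Theta -> vec N -> mat N)
  (Hsig : sigma_family C sigma)
  (Hne : exists x, SigmaT sigma x)
  (Hell : forall delta, 0 < delta -> exists nu, 0 < nu /\
     forall th x, ~ dist_le (SigmaT sigma) x delta ->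
       forall xi : vec N,
         sumI (fun i => sumI (fun j => xi i * AAt (sigma th x) i j * xi j))
           >= nu * sumI (fun i => xi i ^ 2)) :
  forall kappa, 0 < kappa -> SS sigma kappa.
Proof.
case: Hne => s Hs kappa Hk delta Hd.
case: (Hell delta Hd) => nu [Hnu Hel].
case: Hsig => [_ [Hb _]].
pose S2 := sumI (fun k => s k ^ 2).
have HS2 : 0 <= S2 by apply: sumI_ge0 => k; apply: pow2_ge_0.
pose R2 := sumI (fun k => 2 + 2 * s k ^ 2) + 1.
have HR2 : 1 <= R2.
  have : 0 <= sumI (fun k => 2 + 2 * s k ^ 2) by apply: sumI_ge0 => k; have := pow2_ge_0 (s k); lra.
  rewrite /R2; lra.
have Hdd : 0 < delta ^ 2 by apply: pow_lt.
pose lam := (C * C + kappa * sqrt R2 + 1) / (2 * nu * delta ^ 2).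
have Hsq : 0 <= sqrt R2 by apply: sqrt_pos.
have Hlam : 0 < lam.
  apply: Rdiv_lt_0_compat; first nra.
  have := Rmult_lt_0_compat _ _ Hnu Hdd; lra.
have Hlamnu : 2 * lam * nu * delta ^ 2 = C * C + kappa * sqrt R2 + 1.
  rewrite /lam; field; split; lra.
exists (psi s lam R2), (Dpsi s lam), (D2psi s lam), (fun x => uf s x < R2).
split; first exact: psi_C2.
split.
  move=> x Hx.
  have [r [Hr H]] := (cont_u s : forall x eps, 0 < eps -> _) x (R2 - uf s x) ltac:(lra).
  exists r; split => // y Hy; have := H y Hy; have := Rle_abs (uf s y - uf s x); lra.
split.
  exists (sqrt (2 * R2 + 2 * S2)) => x Hx.
  rewrite /vnorm; apply: sqrt_le_1_alt.
  apply: Rle_trans (_ : sumI (fun k => 2 * (x k - s k) ^ 2 + 2 * s k ^ 2) <= _).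
    apply: sumI_le => k; have := pow2_ge_0 (x k - 2 * s k); nra.
  rewrite sumI_add !sumI_scal -/S2; rewrite /uf in Hx; lra.
split.
  move=> x Hx; rewrite /uf.
  apply: Rle_lt_trans (_ : sumI (fun k => 2 + 2 * s k ^ 2) < R2); last by rewrite /R2; lra.
  apply: sumI_le => k; have := Hx k; have := pow2_ge_0 (x k + s k); nra.
split.
  move=> x Hx; rewrite /psi.
  have := @exp_le (- lam * R2) (- lam * uf s x) ltac:(nra); lra.
split.
  move=> x Hx; rewrite /psi.
  have := @exp_le (- lam * uf s x) (- lam * R2) ltac:(nra); lra.
move=> x Hd' Hx.
set u := uf s x.
have Hu0 : 0 <= u by apply: uf_ge0.
have Hnd : delta <= sqrt u.
  apply: Rnot_lt_le => Hlt; apply: Hd' => eps He; exists s; split => //.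
  change (sqrt u < delta + eps); lra.
have Hsu : sqrt u * sqrt u = u by apply: sqrt_sqrt.
have Hu : delta ^ 2 <= u by nra.
have HuR : sqrt u <= sqrt R2 by apply: sqrt_le_1_alt; rewrite /u; lra.
set E := exp (- lam * u).
have HE : 0 < E by apply: exp_pos.
set K := 2 * lam * E.
have HK : 0 < K by rewrite /K; nra.
have HD : vnorm (Dpsi s lam x) = K * sqrt u.
  rewrite /vnorm (_ : sumI _ = K ^ 2 * u); last first.
    rewrite /u /uf -sumI_scal; apply: sumI_ext => i; rewrite /Dpsi -/u -/E -/K; ring.
  rewrite sqrt_mult_alt ?sqrt_pow2 //; [lra | apply: pow2_ge_0].
exists (K * (2 * lam * nu * u - C * C)).
split.
  rewrite HD.
  have : 0 < 2 * lam * nu * u - C * C - kappa * sqrt u.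
    have : 2 * lam * nu * delta ^ 2 <= 2 * lam * nu * u.
      apply: Rmult_le_compat_l => //; nra.
    nra.
  move=> H; have := Rmult_lt_0_compat _ _ HK H; lra.
move=> th.
pose A := AAt (sigma th x).
pose Q := sumI (fun i => sumI (fun j => (x i - s i) * A i j * (x j - s j))).
pose T := sumI (fun i => A i i).
have Htr : trmul A (D2psi s lam x) = K * T - (K * (2 * lam)) * Q.
  rewrite /trmul /T /Q -sumI_scal -sumI_scal -sumI_sub; apply: sumI_ext => i.
  rewrite -(sumI_if (fun j => A i j) i) -!sumI_scal -sumI_sub; apply: sumI_ext => j.
  rewrite /D2psi -/u -/E -/K; case: (j == i); ring.
have HQ : Q >= nu * u by exact: (Hel th x Hd' (fun k => x k - s k)).
have HT : T <= C * C.
  have Hm := Hb th x; rewrite /mnorm in Hm.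
  set S := sumI _ in Hm.
  have HS : 0 <= S by apply: sumI_ge0 => i; apply: sumI_ge0 => j; apply: pow2_ge_0.
  have -> : T = S.
    apply: sumI_ext => i; apply: sumI_ext => j; rewrite /=; ring.
  have := sqrt_sqrt S HS; have := sqrt_pos S; nra.
change (K * (2 * lam * nu * u - C * C) <= - trmul A (D2psi s lam x)).
rewrite Htr.
have : 2 * lam * nu * u - C * C <= 2 * lam * Q - T by nra.
move=> H; have := Rmult_le_compat_l _ _ _ (Rlt_le _ _ HK) H; lra.
Qed.
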